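(* A vector configuration $V$ satisfies $\mathrm{DD}(V)=0$ if and only if it is centrally symmetric up to rescaling, i.e. its nonzero elements can be partitioned into pairs of the form $\{v,-\lambda v\}$ with $\lambda>0$.
   Context: A vector configuration is a finite family (repetitions allowed) $V$ of vectors in $\mathbb{R}^r$; cardinalities count multiplicities. Covector discrepancy: $\mathrm{DD}(V)=\max_f\big|\,|\{v\in V: f(v)>0\}|-|\{v\in V:f(v)<0\}|\,\big|$ over all linear functionals $f$ on $\mathbb{R}^r$. Copies of the zero vector are ignored in the notion of central symmetry. *)

(* Defs.v *)
From HB Require Import structures.
From mathcomp Require Import all_boot all_order all_algebra.
From mathcomp Require Import boolp reals.
Set Implicit Arguments. Unset Strict Implicit. Unset Printing Implicit Defensive.
Import Order.TTheory GRing.Theory Num.Theory.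
Local Open Scope ring_scope.

(* A vector configuration in R^r with n members (repetitions allowed) is
   V : 'I_n -> 'rV[R]_r.  Linear functionals: {linear 'rV[R]_r -> R^o}. *)

Definition npos (R : realType) (r n : nat) (V : 'I_n -> 'rV[R]_r)
  (f : {linear 'rV[R]_r -> R^o}) : nat := #|[set i | 0 < f (V i)]|.

Definition nneg (R : realType) (r n : nat) (V : 'I_n -> 'rV[R]_r)
  (f : {linear 'rV[R]_r -> R^o}) : nat := #|[set i | f (V i) < 0]|.

Definition disc (R : realType) (r n : nat) (V : 'I_n -> 'rV[R]_r)
  (f : {linear 'rV[R]_r -> R^o}) : nat :=
  `|(npos V f)%:Z - (nneg V f)%:Z|%N.

(* DD(V) = max over linear functionals f of disc V f; values lie in [0, n]. *)
Definition DD (R : realType) (r n : nat) (V : 'I_n -> 'rV[R]_r) : nat :=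
  \max_(k < n.+1 | `[< exists f : {linear 'rV[R]_r -> R^o}, disc V f = k >]) k.

Definition centrally_symmetric_up_to_rescaling (R : realType) (r n : nat)
  (V : 'I_n -> 'rV[R]_r) : Prop :=
  exists P : {set {set 'I_n}},
    partition P [set i | V i != 0] /\
    forall B, B \in P ->
      exists i j : 'I_n, [/\ i != j, B = [set i; j] &
        exists lambda : R, 0 < lambda /\ V j = - (lambda *: V i)].

(* Main.v *)
Require Import Defs.
From HB Require Import structures.
From mathcomp Require Import all_boot all_order all_algebra.
From mathcomp Require Import boolp reals.
From mathcomp Require Import zify.
From mathcomp Require Import lra ring.
Import Order.TTheory GRing.Theory Num.Theory.
Set Implicit Arguments. Unset Strict Implicit.
Local Open Scope ring_scope.

Definition fdot (R : realType) (r : nat) (d : 'rV[R]_r) (x : 'rV[R]_r) : R^o :=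
  \sum_k x 0 k * d 0 k.
Lemma fdot_lin (R : realType) (r : nat) (d : 'rV[R]_r) : linear (fdot d).
Proof.
move=> a x y; rewrite /fdot scaler_sumr -big_split /=; apply: eq_bigr => k _.
by rewrite !mxE mulrDl -mulrA.
Qed.
HB.instance Definition _ (R : realType) (r : nat) (d : 'rV[R]_r) :=
  GRing.isLinear.Build R 'rV[R]_r R^o _ (fdot d) (fdot_lin d).

Lemma sg_sum (R : realType) (I : finType) (h : I -> R) :
  \sum_l Num.sg (h l) = (#|[set l | 0 < h l]|)%:R - (#|[set l | h l < 0]|)%:R.
Proof.
have E x : Num.sg x = (0 < x)%R%:R - (x < 0)%R%:R :> R.
  case: sgrP => // _; rewrite ?subr0 ?sub0r //.
under eq_bigr do rewrite E.
rewrite sumrB; congr (_ - _); rewrite -sumr_const [RHS]big_mkcond /=;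
  by apply: eq_bigr => l _; rewrite inE; case: ifP.
Qed.

Lemma disc0 (R : realType) (r n : nat) (V : 'I_n -> 'rV[R]_r)
  (f : {linear 'rV[R]_r -> R^o}) :
  disc V f = 0%N <-> \sum_l Num.sg (f (V l)) = 0.
Proof.
rewrite sg_sum /disc /npos /nneg; split.
  by move/eqP; rewrite absz_eq0 subr_eq0 eqz_nat => /eqP ->; rewrite subrr.
by move/eqP; rewrite subr_eq0 eqr_nat => /eqP ->; rewrite subrr.
Qed.

Lemma disc_le (R : realType) (r n : nat) (V : 'I_n -> 'rV[R]_r)
  (f : {linear 'rV[R]_r -> R^o}) : (disc V f <= n)%N.
Proof.
rewrite /disc.
have : (npos V f <= n)%N by rewrite -[n in (_ <= n)%N]card_ord max_card.
have : (nneg V f <= n)%N by rewrite -[n in (_ <= n)%N]card_ord max_card.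
move: (npos V f) (nneg V f) => a b hb ha.
lia.
Qed.

Lemma DD0_iff (R : realType) (r n : nat) (V : 'I_n -> 'rV[R]_r) :
  DD V = 0%N <-> forall f : {linear 'rV[R]_r -> R^o}, disc V f = 0%N.
Proof.
split.
  move=> H f; apply/eqP; rewrite -leqn0 -H.
  have hl : (disc V f < n.+1)%N by rewrite ltnS disc_le.
  apply: (leq_bigmax_cond (Ordinal hl) (F := fun k : 'I_n.+1 => nat_of_ord k)).
  by apply/asboolP; exists f.
move=> H; rewrite /DD; apply: big1 => k /asboolP [f <-]; exact: H.
Qed.
Lemma cs_DD (R : realType) (r n : nat) (V : 'I_n -> 'rV[R]_r) :
  centrally_symmetric_up_to_rescaling V -> DD V = 0%N.
Proof.
move=> [P [partP HB]]; apply/DD0_iff => f; apply/disc0.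
move: partP => /and3P [/eqP covP trivP _].
rewrite (bigID (mem [set i | V i != 0])) /=.
rewrite [X in _ + X]big1 ?addr0; last first.
  by move=> l; rewrite inE negbK => /eqP ->; rewrite linear0 sgr0.
rewrite -covP big_trivIset //=.
apply: big1 => B /HB [i [j [ij -> [lam [lp Vj]]]]].
rewrite big_setU1 ?inE //= big_set1 Vj linearN linearZ /=.
by rewrite sgrN sgrM (gtr0_sg lp) mul1r subrr.
Qed.
Definition Rp (R : realType) (r n : nat) (V : 'I_n -> 'rV[R]_r) (k : 'I_n) :=
  [set l | `[< exists mu : R, 0 < mu /\ V l = mu *: V k >]].
Definition Rn (R : realType) (r n : nat) (V : 'I_n -> 'rV[R]_r) (k : 'I_n) :=
  [set l | `[< exists mu : R, 0 < mu /\ V l = - (mu *: V k) >]].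

Section Pairing.
Context (R : realType) (r n : nat) (V : 'I_n -> 'rV[R]_r).

Lemma RpP k l : reflect (exists mu : R, 0 < mu /\ V l = mu *: V k) (l \in Rp V k).
Proof. by rewrite inE; apply: asboolP. Qed.
Lemma RnP k l : reflect (exists mu : R, 0 < mu /\ V l = - (mu *: V k)) (l \in Rn V k).
Proof. by rewrite inE; apply: asboolP. Qed.

Lemma Rp_self k : k \in Rp V k.
Proof. by apply/RpP; exists 1; rewrite ltr01 scale1r. Qed.

Lemma Rpn_disj k l : V k != 0 -> l \in Rp V k -> l \in Rn V k -> False.
Proof.
move=> nz /RpP [mu [mup e1]] /RnP [nu [nup e2]].
have : (mu + nu) *: V k = 0 by rewrite scalerDl -[mu *: _]e1 e2 addrC subrr.
by move/eqP; rewrite scaler_eq0 (negbTE nz) orbF; rewrite gt_eqF // addr_gt0.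
Qed.

Lemma ray_count k i j nu : V k != 0 -> 0 < nu -> V j = - (nu *: V i) ->
  ((i \in Rp V k) + (j \in Rp V k) = (i \in Rn V k) + (j \in Rn V k))%N.
Proof.
move=> nz nup Vj.
have Vi : V i = - (nu^-1 *: V j).
  by rewrite Vj scalerN opprK scalerA mulVf ?gt_eqF // scale1r.
have nuip : 0 < nu^-1 by rewrite invr_gt0.
case: (boolP (i \in Rp V k)) => [hi|hi].
  have hj : j \in Rn V k.
    by case/RpP: hi => mu [mup e]; apply/RnP; exists (nu * mu);
      rewrite mulr_gt0 // Vj e scalerA.
  rewrite hj; case: (boolP (i \in Rn V k)) => [/(Rpn_disj nz hi)//|_].
  by case: (boolP (j \in Rp V k)) => [/(Rpn_disj nz)/(_ hj)|].
case: (boolP (i \in Rn V k)) => [hi'|hi'].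
  have hj : j \in Rp V k.
    by case/RnP: hi' => mu [mup e]; apply/RpP; exists (nu * mu);
      rewrite mulr_gt0 // Vj e scalerN opprK scalerA.
  rewrite hj; case: (boolP (j \in Rn V k)) => [/(Rpn_disj nz hj)//|//].
have -> : (j \in Rp V k) = false.
  apply/negbTE/negP => /RpP [mu [mup e]]; move/negP: hi'; apply; apply/RnP.
  by exists (nu^-1 * mu); rewrite mulr_gt0 // Vi e scalerA.
have -> : (j \in Rn V k) = false.
  apply/negbTE/negP => /RnP [mu [mup e]]; move/negP: hi; apply; apply/RpP.
  by exists (nu^-1 * mu); rewrite mulr_gt0 // Vi e scalerN opprK scalerA.
by [].
Qed.

Lemma card_split (X A : {set 'I_n}) i j : i \in A -> j \in A -> i != j ->
  #|X :&: A| = ((i \in X) + (j \in X) + #|X :&: (A :\ i :\ j)|)%N.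
Proof.
move=> iA jA ij.
rewrite (cardsD1 i (X :&: A)) (cardsD1 j ((X :&: A) :\ i)).
rewrite !setIDA !inE iA jA eq_sym ij !andbT addnA.
by congr (_ + _ + #|_|)%N; apply/setP => x; rewrite !inE; case: (x == j); case: (x == i).
Qed.

Lemma pairing (A : {set 'I_n}) :
  (forall k, k \in A -> V k != 0) ->
  (forall k, k \in A -> #|Rp V k :&: A| = #|Rn V k :&: A|) ->
  exists P : {set {set 'I_n}},
    partition P A /\
    forall B, B \in P ->
      exists i j : 'I_n, [/\ i != j, B = [set i; j] &
        exists lambda : R, 0 < lambda /\ V j = - (lambda *: V i)].
Proof.
move: {2}#|A| (leqnn #|A|) => m; elim: m A => [|m IH] A hA nzA balA.
  move: hA; rewrite leqn0 cards_eq0 => /eqP ->.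
  by exists set0; rewrite partition_set0 eqxx; split => // B; rewrite inE.
case: (set_0Vmem A) => [->|[i iA]].
  by exists set0; rewrite partition_set0 eqxx; split => // B; rewrite inE.
have : (0 < #|Rn V i :&: A|)%N.
  by rewrite -balA // card_gt0; apply/set0Pn; exists i; rewrite inE Rp_self.
rewrite card_gt0 => /set0Pn [j]; rewrite inE => /andP [/RnP [nu [nup Vj]] jA].
have ij : i != j.
  apply/negP => /eqP eij; move: Vj; rewrite -eij => /eqP.
  rewrite -addr_eq0 -{1}[V i]scale1r -scalerDl scaler_eq0 (negbTE (nzA i iA)) orbF.
  by rewrite gt_eqF // addr_gt0.
set A' := A :\ i :\ j.
have hA' : (#|A'| <= m)%N.
  have := card_split A iA jA ij; rewrite setIid iA jA.
  have -> : A :&: A' = A' by apply/setIidPr/subsetP => x; rewrite !inE => /and3P [].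
  move=> e; move: hA; rewrite e /=; lia.
have nzA' : forall k, k \in A' -> V k != 0.
  by move=> k; rewrite !inE => /and3P [_ _ /nzA].
have balA' : forall k, k \in A' -> #|Rp V k :&: A'| = #|Rn V k :&: A'|.
  move=> k kA'; have kA : k \in A by move: kA'; rewrite !inE => /and3P [].
  have := balA k kA; rewrite (card_split _ iA jA ij) (card_split (Rn V k) iA jA ij).
  by rewrite (ray_count (nzA k kA) nup Vj) => /eqP; rewrite eqn_add2l => /eqP.
have [P' [partP' HP']] := IH A' hA' nzA' balA'.
exists ([set i; j] |: P'); split.
  have -> : A = [set i; j] :|: A'.
    apply/setP => x; rewrite !inE.
    case: (eqVneq x i) => [->|xi] //=; case: (eqVneq x j) => [->|xj] //=.
  apply: partitionU1 => //; first by apply/set0Pn; exists i; rewrite !inE eqxx.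
  rewrite disjoints_subset; apply/subsetP => x; rewrite !inE.
  by case/orP => /eqP ->; rewrite eqxx ?andbF.
move=> B; rewrite in_setU1 => /orP [/eqP ->|/HP'] //.
by exists i, j; split => //; exists nu.
Qed.
End Pairing.
Lemma eps_exists (R : realType) (I : finType) (a b : I -> R) (P : pred I) :
  (forall l, P l -> 0 < b l) ->
  exists2 e : R, 0 < e & forall l, P l -> e * `|a l| < b l.
Proof.
move=> bp.
suff [e ep He] : exists2 e : R, 0 < e & forall l, l \in enum I -> P l -> e * `|a l| < b l.
  by exists e => // l; apply: He; rewrite mem_enum.
elim: (enum I) => [|x s [e ep He]]; first by exists 1.
case: (boolP (P x)) => Px; last first.
  exists e => // l; rewrite inE => /orP [/eqP -> Px'|ls]; last exact: He.
  by rewrite Px' in Px.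
have Ap : 0 < `|a x| + 1 by rewrite ltr_wpDl.
set e' := Num.min e (b x / (`|a x| + 1)).
have e'p : 0 < e' by rewrite lt_min ep divr_gt0 // bp.
have e'e : e' <= e by rewrite ge_min lexx.
have e'b : e' * (`|a x| + 1) <= b x.
  by rewrite -ler_pdivlMr // ge_min lexx orbT.
exists e' => // l; rewrite inE => /orP [/eqP -> _|ls Pl].
  move: e'b; rewrite mulrDr mulr1 => e'b; lra.
have := He l ls Pl; have : e' * `|a l| <= e * `|a l| by rewrite ler_wpM2r.
lra.
Qed.

Lemma poly_nonroot (R : realType) (Q : {poly R}) : Q != 0 -> exists t, ~~ root Q t.
Proof.
move=> Qn; have [//|H] := pselect (exists t, ~~ root Q t); exfalso.
have := max_poly_roots Qn (rs := [seq (k%:R : R) | k <- iota 0 (size Q)]).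
rewrite size_map size_iota ltnn => h; suff : false by []; apply: h.
  by apply/allP => x _; apply/negPn/negP => nx; apply: H; exists x.
by rewrite map_inj_uniq ?iota_uniq // => x y /eqP; rewrite eqr_nat => /eqP.
Qed.
Lemma generic (R : realType) (r : nat) (I : finType) (w : I -> 'rV[R]_r) (P : pred I) :
  (forall l, P l -> w l != 0) -> exists c : 'rV[R]_r, forall l, P l -> fdot c (w l) != 0.
Proof.
case: r w => [|r'] w hw.
  exists 0 => l Pl; have := hw l Pl; by rewrite (thinmx0 (w l)) eqxx.
pose pw l : {poly R} := \poly_(i < r'.+1) w l 0 (inord i).
have pwn : forall l, P l -> pw l != 0.
  move=> l Pl; apply/negP => /eqP h; move/negP: (hw l Pl); apply; apply/eqP/rowP => k.
  have := congr1 (fun q : {poly R} => q`_k) h; rewrite coef_poly ltn_ord inord_val.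
  by rewrite coef0 !mxE.
have Qn : \prod_(l | P l) pw l != 0 by apply/prodf_neq0.
have [t ht] := poly_nonroot Qn.
exists (\row_k t ^+ k) => l Pl.
have : (pw l).[t] != 0.
  move: ht; rewrite /root horner_prod => /prodf_neq0; apply; exact: Pl.
rewrite horner_poly /fdot; congr (_ != _); apply: eq_bigr => k _.
by rewrite inord_val mxE.
Qed.
Lemma sg_perturb (R : realType) (x b : R) : `|b| < `|x| -> Num.sg (x + b) = Num.sg x.
Proof.
move=> h; have h1 := ler_norm b; have h2 := ler_norm (- b); rewrite normrN in h2.
case: (sgrP x) h => hx.
- by move=> h; have := normr_ge0 b; lra.
- move=> h; apply: gtr0_sg; lra.
- move=> h; apply: ltr0_sg; lra.
Qed.

Lemma card_sum (R : realType) (I : finType) (X : {set I}) :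
  \sum_l ((l \in X)%:R : R) = #|X|%:R.
Proof.
by rewrite -sumr_const [RHS]big_mkcond /=; apply: eq_bigr => l _; case: ifP.
Qed.

Lemma balance (R : realType) (r n : nat) (V : 'I_n -> 'rV[R]_r)
  (H : forall d : 'rV[R]_r, \sum_l Num.sg (fdot d (V l)) = 0) (i : 'I_n) :
  V i != 0 -> #|Rp V i| = #|Rn V i|.
Proof.
move=> nzi; set v := V i.
have [p hp] : exists p, v 0 p != 0.
  case: (pselect (exists p, v 0 p != 0)) => // hn; exfalso; move/negP: nzi; apply.
  apply/eqP/rowP => k; rewrite mxE; apply/eqP/negPn/negP => hk; apply: hn.
  by exists k.
pose al (x : 'rV[R]_r) := x 0 p / v 0 p.
pose u (x : 'rV[R]_r) := x - al x *: v.
have alZ mu : al (mu *: v) = mu by rewrite /al mxE mulfK.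
have alN x : al (- x) = - al x by rewrite /al mxE mulNr.
have memRp l : (l \in Rp V i) = (u (V l) == 0) && (0 < al (V l)).
  apply/RpP/andP => [[mu [mup e]]|[h a]].
    by rewrite e /u alZ subrr eqxx.
  by exists (al (V l)); split => //; move: h; rewrite /u subr_eq0 => /eqP.
have memRn l : (l \in Rn V i) = (u (V l) == 0) && (al (V l) < 0).
  apply/RnP/andP => [[mu [mup e]]|[h a]].
    by rewrite e /u alN alZ scaleNr opprK addNr eqxx oppr_lt0.
  exists (- al (V l)); split; first by rewrite oppr_gt0.
  by move: h; rewrite /u subr_eq0 scaleNr opprK => /eqP.
have [c hc] := generic (w := fun l => u (V l)) (P := fun l => u (V l) != 0)
  (fun l h => h).
pose phi x := fdot c (u x).
have [e ep He] := @eps_exists R _ (fun l => al (V l)) (fun l => `|phi (V l)|)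
  (fun l => u (V l) != 0) (fun l h => ltac:(rewrite normr_gt0; exact: hc)).
pose d t := c + ((t - fdot c v) / v 0 p) *: delta_mx 0 p.
have fd t x : fdot (d t) x = phi x + t * al x.
  have -> : fdot (d t) x = fdot c x + (t - fdot c v) / v 0 p * x 0 p.
    rewrite {1}/fdot; under eq_bigr do rewrite !mxE mulrDr.
    rewrite big_split /=; congr (_ + _).
    rewrite (bigD1 p) //= big1 => [|k kp]; last by rewrite (negbTE kp) !mulr0.
    by rewrite eqxx mulr1 addr0 mulrC.
  rewrite /phi /u linearB linearZ /= /al.
  have sc (a b : R) : a *: (b : R^o) = a * b by [].
  rewrite sc; ring.
have S t : \sum_l Num.sg (phi (V l) + t * al (V l)) = 0.
  by under eq_bigr do rewrite -fd; apply: H.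
have term l : Num.sg (phi (V l) + e * al (V l)) - Num.sg (phi (V l) + - e * al (V l))
   = ((l \in Rp V i)%:R - (l \in Rn V i)%:R) *+ 2.
  rewrite memRp memRn; case: (eqVneq (u (V l)) 0) => hu /=.
    rewrite /phi hu linear0 !add0r mulNr sgrN opprK sgrM (gtr0_sg ep) mul1r.
    by case: sgrP => _; rewrite /= ?subr0 ?sub0r mulr2n.
  have h1 := He l hu.
  have n1 : `|e * al (V l)| < `|phi (V l)| by rewrite normrM (gtr0_norm ep).
  have n2 : `|- e * al (V l)| < `|phi (V l)| by rewrite mulNr normrN.
  by rewrite (sg_perturb n1) (sg_perturb n2) /= !subrr ?mul0rn.
have := congr2 (fun a b => a - b) (S e) (S (- e)).
rewrite /= -sumrB subrr.
under eq_bigr do rewrite term.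
rewrite sumrMnl sumrB !card_sum => /eqP; rewrite mulrn_eq0 /= subr_eq0 eqr_nat.
by move/eqP.
Qed.
Theorem mainTheorem9 (R : realType) (r n : nat) (V : 'I_n -> 'rV[R]_r) :
  DD V = 0%N <-> centrally_symmetric_up_to_rescaling V.
Proof.
split; last exact: cs_DD.
move=> /DD0_iff H.
have H' : forall d : 'rV[R]_r, \sum_l Num.sg (fdot d (V l)) = 0.
  by move=> d; apply/(disc0 V (fdot d : {linear 'rV[R]_r -> R^o})); apply: H.
apply: pairing => [k|k]; first by rewrite inE.
rewrite inE => nzk.
have -> : Rp V k :&: [set i | V i != 0] = Rp V k.
  apply/setIidPl/subsetP => l /RpP [mu [mup e]].
  by rewrite inE e scaler_eq0 negb_or gt_eqF.
have -> : Rn V k :&: [set i | V i != 0] = Rn V k.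
  apply/setIidPl/subsetP => l /RnP [mu [mup e]].
  by rewrite inE e oppr_eq0 scaler_eq0 negb_or gt_eqF.
exact: balance.
Qed.
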